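(* Let $\mathbb{T}$ be a time scale, $\alpha<\beta$ points of $\mathbb{T}$, and let $\varphi,\psi:[\alpha,\beta]_{\mathbb{T}}\to\mathbb{R}$ be nabla differentiable with $\psi^{\nabla}(x)\neq 0$ for $x\in(\alpha,\beta]_{\mathbb{T}}$. Define $$\mathcal{Y}_{\varphi,\psi}(x)=\frac{\varphi^{\nabla}(x)}{\psi^{\nabla}(x)}\psi(x)-\varphi(x),\qquad x\in(\alpha,\beta]_{\mathbb{T}}.$$ Suppose that $\varphi^{\nabla}/\psi^{\nabla}$ is nabla differentiable. Then: (1) If $\psi^{\rho}\ge 0$ and $\varphi^{\nabla}/\psi^{\nabla}$ is increasing (resp. decreasing), then $\mathcal{Y}_{\varphi,\psi}$ is increasing (resp. decreasing). (2) If $\psi^{\rho}\le 0$ and $\varphi^{\nabla}/\psi^{\nabla}$ is increasing (resp. decreasing), then $\mathcal{Y}_{\varphi,\psi}$ is decreasing (resp. increasing).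
   Context: $\mathbb{T}$ is a time scale (nonempty closed subset of $\mathbb{R}$), $[\alpha,\beta]_{\mathbb{T}}=[\alpha,\beta]\cap\mathbb{T}$. $\rho(t)=\sup\{s\in\mathbb{T}:s<t\}$ is the backward jump operator, $f^{\rho}=f\circ\rho$, and $f^{\nabla}$ is the nabla derivative. ''Increasing''/''decreasing'' are meant in the non-strict sense (nondecreasing/nonincreasing). *)

(* Defs.v *)
From Stdlib Require Import Reals.
From Coquelicot Require Import Coquelicot.
Open Scope R_scope.

Definition time_scale (T : R -> Prop) : Prop :=
  (exists t, T t) /\ closed_set T.

(* Backward jump operator rho(t) = sup {s in T | s < t}, with the usual
   convention sup of the empty set = t (so rho(min T) = min T). *)
Definition rho (T : R -> Prop) (t : R) : R :=
  match Lub_Rbar (fun s => T s /\ s < t) with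
  | Finite r => r
  | _ => t
  end.

Definition Icc_T (T : R -> Prop) (a b : R) (x : R) : Prop := T x /\ a <= x <= b.
Definition Ioc_T (T : R -> Prop) (a b : R) (x : R) : Prop := T x /\ a < x <= b.

Definition is_nabla_deriv (T D : R -> Prop) (f : R -> R) (t d : R) : Prop :=
  forall eps : R, 0 < eps -> exists delta : R, 0 < delta /\
    forall s : R, D s -> Rabs (t - s) < delta ->
      Rabs (f (rho T t) - f s - d * (rho T t - s)) <= eps * Rabs (rho T t - s).

Definition increasing_on (D : R -> Prop) (f : R -> R) : Prop :=
  forall s t, D s -> D t -> s <= t -> f s <= f t.
Definition decreasing_on (D : R -> Prop) (f : R -> R) : Prop :=
  forall s t, D s -> D t -> s <= t -> f t <= f s.

(* Main.v *)
Require Import Defs.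
From Stdlib Require Import Reals Lra Psatz Classical.
From Coquelicot Require Import Coquelicot.
Open Scope R_scope.

Lemma closed_adh (T : R -> Prop) (x : R) : closed_set T ->
  (forall d, 0 < d -> exists u, T u /\ Rabs (u - x) < d) -> T x.
Proof.
  intros Hc Ha. apply NNPP. intro Hn.
  destruct (Hc x Hn) as [[d Hd] Hinc].
  destruct (Ha d Hd) as [u [Tu Hu]].
  apply (Hinc u); [exact Hu | exact Tu].
Qed.

Lemma rho_char (T : R -> Prop) (x m : R) :
  (exists u, T u /\ u < x) ->
  (forall u, T u -> u < x -> u <= m) ->
  (forall b, (forall u, T u -> u < x -> u <= b) -> m <= b) ->
  rho T x = m.
Proof.
  intros [u0 [Tu0 Hu0]] Hub Hl. unfold rho.
  assert (E : Lub_Rbar (fun s => T s /\ s < x) = Finite m).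
  { apply is_lub_Rbar_unique. split.
    - intros y [Ty Hy]. simpl. apply Hub; auto.
    - intros b Hb. destruct b as [b| |]; simpl.
      + apply Hl. intros u Tu Hu. exact (Hb u (conj Tu Hu)).
      + exact I.
      + exact (Hb u0 (conj Tu0 Hu0)). }
  rewrite E. reflexivity.
Qed.

Lemma le_eps (a b : R) : 0 <= b -> (forall eps, 0 < eps -> a <= eps * b) -> a <= 0.
Proof.
  intros Hb H. destruct (Rle_or_lt a 0) as [h|h]; auto.
  assert (He : 0 < a / (2 * (b + 1))) by (apply Rdiv_lt_0_compat; lra).
  specialize (H _ He).
  assert (a / (2 * (b+1)) * b < a).
  { unfold Rdiv. 
    replace (a * / (2 * (b + 1)) * b) with (a * (b / (2*(b+1)))) by (field; lra).
    assert (b / (2 * (b+1)) < 1).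
    { apply (Rmult_lt_reg_r (2*(b+1))); [lra|]. unfold Rdiv. rewrite Rmult_assoc, Rinv_l; lra. }
    nra. }
  lra.
Qed.

Lemma nabla_exact (T D : R -> Prop) f x d r : is_nabla_deriv T D f x d -> D x -> rho T x = r ->
  f x - f r = d * (x - r).
Proof.
  intros Hd Dx Hr. subst r.
  assert (Rabs (f (rho T x) - f x - d * (rho T x - x)) <= 0).
  { apply (le_eps _ (Rabs (rho T x - x))). apply Rabs_pos.
    intros eps He. destruct (Hd eps He) as [del [Hdel H]].
    apply H; auto. rewrite Rminus_diag, Rabs_R0. exact Hdel. }
  pose proof (Rabs_pos (f (rho T x) - f x - d * (rho T x - x))).
  assert (Rabs (f (rho T x) - f x - d * (rho T x - x)) = 0) by lra.
  apply Rabs_eq_0 in H1. lra.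
Qed.

Definition cont (D : R -> Prop) (f : R -> R) (x : R) : Prop :=
  forall e, 0 < e -> exists del, 0 < del /\ forall u, D u -> Rabs (x - u) < del -> Rabs (f u - f x) <= e.

Lemma nabla_cont T D f x d : is_nabla_deriv T D f x d -> D x -> cont D f x.
Proof.
  intros Hd Dx e He. set (r := rho T x). set (K := Rabs (x - r)).
  assert (HK : 0 <= K) by apply Rabs_pos.
  set (e0 := e / (4 * (K + 1))).
  assert (He0 : 0 < e0) by (unfold e0; apply Rdiv_lt_0_compat; lra).
  destruct (Hd e0 He0) as [d0 [Hd0 H]].
  set (d1 := e / (2 * (Rabs d + 1))).
  assert (Hda : 0 <= Rabs d) by apply Rabs_pos.
  assert (Hd1 : 0 < d1) by (unfold d1; apply Rdiv_lt_0_compat; lra).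
  exists (Rmin d0 (Rmin 1 d1)). split.
  { apply Rmin_pos; auto. apply Rmin_pos; lra. }
  intros u Du Hu.
  assert (Hu0 : Rabs (x - u) < d0) by (eapply Rlt_le_trans; [exact Hu| apply Rmin_l]).
  assert (Hu1 : Rabs (x - u) < 1) by (eapply Rlt_le_trans; [exact Hu| eapply Rle_trans; [apply Rmin_r| apply Rmin_l]]).
  assert (Hu2 : Rabs (x - u) < d1) by (eapply Rlt_le_trans; [exact Hu| eapply Rle_trans; [apply Rmin_r| apply Rmin_r]]).
  pose proof (H u Du Hu0) as A1.
  assert (A2 := H x Dx). rewrite Rminus_diag, Rabs_R0 in A2. specialize (A2 Hd0).
  fold r in A1, A2.
  assert (Er : Rabs (r - u) <= K + Rabs (x - u)).
  { unfold K. replace (r - u) with (-(x - r) + (x - u)) by ring.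
    eapply Rle_trans; [apply Rabs_triang|]. rewrite Rabs_Ropp. lra. }
  assert (Exr : Rabs (r - x) = K) by (unfold K; rewrite <- Rabs_Ropp; f_equal; ring).
  rewrite Exr in A2.
  replace (f u - f x) with ((f r - f x - d * (r - x)) - (f r - f u - d * (r - u)) + d * (u - x)) by ring.
  eapply Rle_trans; [apply Rabs_triang|].
  eapply Rle_trans; [apply Rplus_le_compat_r; apply Rabs_triang|].
  rewrite Rabs_Ropp, Rabs_mult.
  assert (Rabs (u - x) = Rabs (x - u)) by (rewrite <- Rabs_Ropp; f_equal; ring).
  rewrite H0.
  assert (B1 : e0 * Rabs (r - u) <= e0 * (K + 1)) by (apply Rmult_le_compat_l; lra).
  assert (B2 : Rabs d * Rabs (x - u) <= Rabs d * d1) by (apply Rmult_le_compat_l; lra).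
  assert (B3 : e0 * K + e0 * (K+1) <= e / 2).
  { unfold e0. replace (e / (4 * (K + 1)) * K + e / (4 * (K + 1)) * (K + 1)) with (e * ((2*K+1) / (4 * (K+1)))) by (field; lra).
    assert ((2*K+1) / (4*(K+1)) <= 1/2).
    { apply (Rmult_le_reg_r (4*(K+1))); [lra|]. unfold Rdiv. rewrite Rmult_assoc, Rinv_l; lra. }
    nra. }
  assert (B4 : Rabs d * d1 <= e / 2).
  { unfold d1. replace (Rabs d * (e / (2 * (Rabs d + 1)))) with (e/2 * (Rabs d / (Rabs d + 1))) by (field; lra).
    assert (Rabs d / (Rabs d + 1) <= 1).
    { apply (Rmult_le_reg_r (Rabs d+1)); [lra|]. unfold Rdiv. rewrite Rmult_assoc, Rinv_l; lra. }
    nra. }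
  lra.
Qed.

Lemma cont_minus D f g x : cont D f x -> cont D g x -> cont D (fun y => f y - g y) x.
Proof.
  intros Hf Hg e He.
  destruct (Hf (e/2)) as [d1 [Hd1 H1]]; [lra|].
  destruct (Hg (e/2)) as [d2 [Hd2 H2]]; [lra|].
  exists (Rmin d1 d2). split; [apply Rmin_pos; auto|].
  intros u Du Hu.
  assert (A := H1 u Du (Rlt_le_trans _ _ _ Hu (Rmin_l _ _))).
  assert (B := H2 u Du (Rlt_le_trans _ _ _ Hu (Rmin_r _ _))).
  replace (f u - g u - (f x - g x)) with ((f u - f x) + - (g u - g x)) by ring.
  eapply Rle_trans; [apply Rabs_triang|]. rewrite Rabs_Ropp. lra.
Qed.

Lemma cont_mult D f g x : cont D f x -> cont D g x -> cont D (fun y => f y * g y) x.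
Proof.
  intros Hf Hg e He.
  set (K := 1 + Rabs (f x) + Rabs (g x)).
  assert (HK : 1 <= K) by (unfold K; pose proof (Rabs_pos (f x)); pose proof (Rabs_pos (g x)); lra).
  set (a := Rmin 1 (e / K)).
  assert (Ha : 0 < a) by (apply Rmin_pos; [lra| apply Rdiv_lt_0_compat; lra]).
  assert (Ha1 : a <= 1) by apply Rmin_l.
  assert (Ha2 : a * K <= e).
  { assert (a <= e / K) by apply Rmin_r.
    apply (Rmult_le_compat_r K) in H; [|lra]. unfold Rdiv in H. rewrite Rmult_assoc, Rinv_l in H; lra. }
  destruct (Hf a Ha) as [d1 [Hd1 H1]].
  destruct (Hg a Ha) as [d2 [Hd2 H2]].
  exists (Rmin d1 d2). split; [apply Rmin_pos; auto|].
  intros u Du Hu.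
  assert (A := H1 u Du (Rlt_le_trans _ _ _ Hu (Rmin_l _ _))).
  assert (B := H2 u Du (Rlt_le_trans _ _ _ Hu (Rmin_r _ _))).
  replace (f u * g u - f x * g x) with ((f u - f x) * (g u - g x) + f x * (g u - g x) + g x * (f u - f x)) by ring.
  eapply Rle_trans; [apply Rabs_triang|].
  eapply Rle_trans; [apply Rplus_le_compat_r; apply Rabs_triang|].
  rewrite !Rabs_mult.
  pose proof (Rabs_pos (f u - f x)). pose proof (Rabs_pos (g u - g x)).
  pose proof (Rabs_pos (f x)). pose proof (Rabs_pos (g x)).
  assert (Rabs (f u - f x) * Rabs (g u - g x) <= a * a) by (apply Rmult_le_compat; lra).
  assert (Rabs (f x) * Rabs (g u - g x) <= Rabs (f x) * a) by (apply Rmult_le_compat_l; lra).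
  assert (Rabs (g x) * Rabs (f u - f x) <= Rabs (g x) * a) by (apply Rmult_le_compat_l; lra).
  assert (a * a <= a) by nra.
  unfold K in Ha2. nra.
Qed.

Lemma cont_scal D c f x : cont D f x -> cont D (fun y => c * f y) x.
Proof.
  intros Hf. apply cont_mult; auto. intros e He. exists 1. split; [lra|].
  intros. rewrite Rminus_diag, Rabs_R0. lra.
Qed.

Lemma mono_core (T : R -> Prop) (s t : R) (F : R -> R) :
  closed_set T -> T s -> T t -> s <= t ->
  (forall x, T x -> s <= x < t -> forall e, 0 < e -> exists del, 0 < del /\
      forall u, T u -> x < u < x + del -> u <= t -> F x <= F u + e) ->
  (forall c v, T c -> T v -> s <= c < v -> v <= t -> (forall u, T u -> c < u < v -> False) -> F c <= F v) ->
  (forall c, T c -> s < c <= t -> (forall del, 0 < del -> exists u, T u /\ c - del < u < c) ->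
      forall e, 0 < e -> exists del, 0 < del /\
      forall u, T u -> s <= u < c -> c - del < u -> F u <= F c + e * (c - u)) ->
  F s <= F t.
Proof.
  intros Hcl Ts Tt Hst Hcont Hjump Hdense.
  assert (Main : forall eps, 0 < eps -> F s - F t <= eps * (t - s)).
  2:{ apply Rminus_le. apply (le_eps _ (t - s)); [lra|]. exact Main. }
  intros eps Heps. apply Rnot_lt_le. intro Hbad.
  set (B := fun u => T u /\ s <= u <= t /\ F u > F t + eps * (t - u)).
  assert (Bs : B s) by (unfold B; repeat split; auto; lra).
  destruct (completeness B) as [c [Hub Hlub]].
  { exists t. intros u [_ [h _]]. lra. }
  { exists s. exact Bs. }
  assert (Hsc : s <= c) by (apply Hub; exact Bs).
  assert (Hct : c <= t) by (apply Hlub; intros u [_ [h _]]; lra).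
  assert (Happ : forall d, 0 < d -> exists u, B u /\ c - d < u <= c).
  { intros d Hd. apply NNPP. intro Hn.
    assert (c <= c - d); [|lra].
    apply Hlub. intros u Bu. apply Rnot_lt_le. intro Hu. apply Hn. exists u. split; auto. }
  assert (Tc : T c).
  { apply closed_adh; auto. intros d Hd. destruct (Happ d Hd) as [u [Bu Hu]].
    exists u. split; [apply Bu|]. apply Rabs_lt_between'. lra. }
  assert (notB : forall u, T u -> c < u -> u <= t -> F u <= F t + eps * (t - u)).
  { intros u Tu Hcu Hut. apply Rnot_lt_le. intro h.
    assert (u <= c) by (apply Hub; unfold B; repeat split; auto; lra). lra. }
  destruct (Rlt_or_le (F t + eps * (t - c)) (F c)) as [Hc|Hc].
  - assert (Hct' : c < t) by (destruct (Req_dec c t); [subst; lra| lra]).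
    destruct (classic (forall d, 0 < d -> exists u, T u /\ c < u < c + d)) as [Hrd|Hrs].
    + set (D := F c - F t - eps * (t - c)).
      destruct (Hcont c Tc (conj Hsc Hct') (D/2)) as [del [Hdel H]]; [unfold D; lra|].
      destruct (Hrd (Rmin del (t - c))) as [u [Tu Hu]]; [apply Rmin_pos; lra|].
      assert (u < c + del) by (pose proof (Rmin_l del (t - c)); lra).
      assert (u < t) by (pose proof (Rmin_r del (t - c)); lra).
      specialize (H u Tu (conj (proj1 Hu) H0) (Rlt_le _ _ H1)).
      specialize (notB u Tu (proj1 Hu) (Rlt_le _ _ H1)).
      assert (eps * (t - u) <= eps * (t - c)) by (apply Rmult_le_compat_l; lra).
      unfold D in H. lra.
    + apply not_all_ex_not in Hrs. destruct Hrs as [d Hd].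
      apply imply_to_and in Hd. destruct Hd as [Hd Hno].
      set (W := fun y => T (- y) /\ c < - y /\ - y <= t).
      destruct (completeness W) as [m [Wub Wlub]].
      { exists (- (c + d)). intros y [Ty [h1 h2]].
        destruct (Rle_or_lt y (- (c + d))) as [h|h]; [lra|].
        exfalso. apply Hno. exists (- y). repeat split; auto; lra. }
      { exists (- t). unfold W. rewrite Ropp_involutive. repeat split; auto; lra. }
      set (v := - m).
      assert (Wt : W (- t)) by (unfold W; rewrite Ropp_involutive; repeat split; auto; lra).
      assert (Hvt : v <= t) by (pose proof (Wub _ Wt); unfold v; lra).
      assert (Hlow : forall u, T u -> c < u -> u <= t -> v <= u).
      { intros u Tu h1 h2. assert (W (- u)) by (unfold W; rewrite Ropp_involutive; auto).
        pose proof (Wub _ H). unfold v; lra. }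
      assert (Hvc : c + d <= v).
      { unfold v. cut (m <= - (c + d)); [lra|]. apply Wlub. intros y [Ty [h1 h2]].
        destruct (Rle_or_lt y (- (c + d))) as [h|h]; [lra|].
        exfalso. apply Hno. exists (- y). repeat split; auto; lra. }
      assert (Tv : T v).
      { apply closed_adh; auto. intros e He. apply NNPP. intro Hn.
        assert (m <= m - e); [|lra].
        apply Wlub. intros y Wy. apply Rnot_lt_le. intro hy. apply Hn.
        exists (- y). split; [apply Wy|]. pose proof (Wub y Wy). apply Rabs_lt_between'. unfold v. lra. }
      assert (F c <= F v).
      { apply Hjump; auto; try lra. intros u Tu [h1 h2].
        assert (v <= u) by (apply Hlow; auto; lra). lra. }
      specialize (notB v Tv ltac:(lra) Hvt).
      assert (eps * (t - v) <= eps * (t - c)) by (apply Rmult_le_compat_l; lra).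
      lra.
  - assert (Hsc' : s < c).
    { destruct (Req_dec s c); [|lra]. subst c. destruct Bs as [_ [_ h]]. lra. }
    assert (HappS : forall d, 0 < d -> exists u, B u /\ c - d < u < c).
    { intros d Hd. destruct (Happ d Hd) as [u [Bu Hu]]. exists u. split; auto.
      split; [lra|]. destruct (Req_dec u c); [|lra]. subst u. destruct Bu as [_ [_ h]]. lra. }
    destruct (Hdense c Tc (conj Hsc' Hct)) with (e := eps) as [del [Hdel H]]; auto.
    { intros d Hd. destruct (HappS d Hd) as [u [Bu Hu]]. exists u. split; [apply Bu| lra]. }
    destruct (HappS del Hdel) as [u [[Tu [h1 h2]] Hu]].
    specialize (H u Tu (conj (proj1 h1) (proj2 Hu)) (proj1 Hu)).
    assert (eps * (t - u) = eps * (t - c) + eps * (c - u)) by ring. lra.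
Qed.

Lemma key (T : R -> Prop) (alpha beta : R) (phi psi phi' psi' gd : R -> R) (sg : R) :
  time_scale T -> T alpha ->
  (forall x, Ioc_T T alpha beta x -> is_nabla_deriv T (Icc_T T alpha beta) phi x (phi' x)) ->
  (forall x, Ioc_T T alpha beta x -> is_nabla_deriv T (Icc_T T alpha beta) psi x (psi' x)) ->
  (forall x, Ioc_T T alpha beta x -> psi' x <> 0) ->
  (forall x, Ioc_T T alpha beta x ->
      is_nabla_deriv T (Icc_T T alpha beta) (fun y => phi' y / psi' y) x (gd x)) ->
  Rabs sg <= 1 ->
  (forall a b, Ioc_T T alpha beta a -> Ioc_T T alpha beta b -> a <= b ->
      0 <= sg * (phi' b / psi' b - phi' a / psi' a) * psi (rho T b)) ->
  forall s t, Ioc_T T alpha beta s -> Ioc_T T alpha beta t -> s <= t ->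
    sg * (phi' s / psi' s * psi s - phi s) <= sg * (phi' t / psi' t * psi t - phi t).
Proof.
  intros [_ Hcl] Ta Hphi Hpsi Hnz Hg Hsg H s t Is It Hst.
  set (g := fun y => phi' y / psi' y) in *.
  set (II := Ioc_T T alpha beta) in *.
  set (DD := Icc_T T alpha beta) in *.
  assert (IinD : forall x, II x -> DD x).
  { intros x [Tx hx]. split; auto; lra. }
  assert (inI : forall x, T x -> s <= x <= t -> II x).
  { intros x Tx hx. destruct Is as [_ hs]. destruct It as [_ ht]. split; auto; lra. }
  change (sg * (g s * psi s - phi s) <= sg * (g t * psi t - phi t)).
  apply (mono_core T s t (fun x => sg * (g x * psi x - phi x))); auto.
  - apply Is.
  - apply It.
  - intros x Tx hx e He.
    assert (Ix : II x) by (apply inI; auto; lra).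
    assert (C : cont DD (fun x => sg * (g x * psi x - phi x)) x).
    { apply cont_scal. apply cont_minus; [apply cont_mult|];
        eapply nabla_cont; eauto. }
    destruct (C e He) as [del [Hdel Hc]].
    exists del. split; auto. intros u Tu hu hut.
    assert (Du : DD u) by (apply IinD; apply inI; auto; lra).
    assert (Rabs (x - u) < del) by (apply Rabs_lt_between'; lra).
    specialize (Hc u Du H0). apply Rabs_le_between' in Hc. lra.
  - intros c v Tc Tv hcv hvt Hno. cbv beta.
    assert (Ic : II c) by (apply inI; auto; lra).
    assert (Iv : II v) by (apply inI; auto; lra).
    assert (Hr : rho T v = c).
    { apply rho_char.
      - exists c; split; auto; lra.
      - intros u Tu hu. apply Rnot_lt_le. intro h. apply (Hno u Tu). lra.
      - intros b Hb. apply Hb; auto; lra. }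
    pose proof (nabla_exact _ _ _ _ _ _ (Hphi v Iv) (IinD v Iv) Hr) as E1.
    pose proof (nabla_exact _ _ _ _ _ _ (Hpsi v Iv) (IinD v Iv) Hr) as E2.
    pose proof (H c v Ic Iv (Rlt_le _ _ (proj2 hcv))) as Hs. rewrite Hr in Hs. change (0 <= sg * (g v - g c) * psi c) in Hs.
    assert (Eg : phi' v = g v * psi' v) by (unfold g; field; apply Hnz; auto).
    assert (Ediff : g v * psi v - phi v - (g c * psi c - phi c) = (g v - g c) * psi c).
    { assert (phi v - phi c = g v * (psi v - psi c)) by (rewrite E1, E2, Eg; ring).
      replace (g v * psi v - phi v - (g c * psi c - phi c)) with
        (g v * psi v - (phi v - phi c) - g c * psi c) by ring.
      rewrite H0. ring. }
    assert (sg * (g v * psi v - phi v) - sg * (g c * psi c - phi c) = sg * (g v - g c) * psi c)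
      by (rewrite <- Rmult_minus_distr_l, Ediff; ring).
    lra.
  - intros c Tc hc Hld e He. cbv beta.
    assert (Ic : II c) by (apply inI; auto; lra).
    assert (Hr : rho T c = c).
    { apply rho_char.
      - destruct (Hld 1) as [u [Tu hu]]; [lra|]. exists u; split; auto; lra.
      - intros u Tu hu; lra.
      - intros b Hb. apply Rnot_lt_le. intro h. destruct (Hld (c - b)) as [u [Tu hu]]; [lra|].
        pose proof (Hb u Tu (proj2 hu)). lra. }
    set (G := Rabs (g c)). set (P := Rabs (psi' c)).
    assert (HG : 0 <= G) by apply Rabs_pos. assert (HP : 0 <= P) by apply Rabs_pos.
    set (e1 := e / 3). set (e2 := e / (3 * (G + 1))). set (e3 := e / (3 * (P + 1))).
    assert (He1 : 0 < e1) by (unfold e1; lra).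
    assert (He2 : 0 < e2) by (unfold e2; apply Rdiv_lt_0_compat; lra).
    assert (He3 : 0 < e3) by (unfold e3; apply Rdiv_lt_0_compat; lra).
    destruct (Hphi c Ic e1 He1) as [d1 [Hd1 D1]].
    destruct (Hpsi c Ic e2 He2) as [d2 [Hd2 D2]].
    destruct (Hpsi c Ic 1 ltac:(lra)) as [d3 [Hd3 D3]].
    destruct (nabla_cont _ _ _ _ _ (Hg c Ic) (IinD c Ic) e3 He3) as [d4 [Hd4 D4]].
    exists (Rmin (Rmin d1 d2) (Rmin d3 d4)). split.
    { apply Rmin_pos; apply Rmin_pos; auto. }
    intros u Tu hu hdu.
    assert (Iu : II u) by (apply inI; auto; lra).
    assert (Du : DD u) by (apply IinD; auto).
    assert (Hw : 0 < c - u) by lra.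
    assert (Aw : Rabs (c - u) = c - u) by (apply Rabs_right; lra).
    pose proof (Rmin_l (Rmin d1 d2) (Rmin d3 d4)). pose proof (Rmin_r (Rmin d1 d2) (Rmin d3 d4)).
    pose proof (Rmin_l d1 d2). pose proof (Rmin_r d1 d2). pose proof (Rmin_l d3 d4). pose proof (Rmin_r d3 d4).
    specialize (D1 u Du ltac:(rewrite Aw; lra)).
    specialize (D2 u Du ltac:(rewrite Aw; lra)).
    specialize (D3 u Du ltac:(rewrite Aw; lra)).
    specialize (D4 u Du ltac:(rewrite Aw; lra)).
    rewrite Hr, Aw in D1. rewrite Hr, Aw in D2. rewrite Hr, Aw in D3.
    fold g in D4.
    assert (Bpsi : Rabs (psi u - psi c) <= (P + 1) * (c - u)).
    { replace (psi u - psi c) with (- (psi c - psi u - psi' c * (c - u)) - psi' c * (c - u)) by ring.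
      eapply Rle_trans; [apply Rabs_triang|]. rewrite Rabs_Ropp, Rabs_Ropp, Rabs_mult, (Rabs_right (c - u)) by lra.
      fold P. lra. }
    assert (T1 : 0 <= sg * (g c - g u) * psi c).
    { pose proof (H u c Iu Ic (Rlt_le _ _ (proj2 hu))) as h. rewrite Hr in h. exact h. }
    assert (T2 : Rabs (g c - g u) * Rabs (psi u - psi c) <= e3 * ((P + 1) * (c - u))).
    { rewrite <- Rabs_Ropp. replace (- (g c - g u)) with (g u - g c) by ring.
      apply Rmult_le_compat; auto using Rabs_pos. }
    assert (Eg : phi' c = g c * psi' c) by (unfold g; field; apply Hnz; auto).
    set (E1 := phi c - phi u - phi' c * (c - u)) in *.
    set (E2 := psi c - psi u - psi' c * (c - u)) in *.
    assert (Edec : (g c * psi c - phi c) - (g u * psi u - phi u) =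
       (g c - g u) * psi c + (g c - g u) * (psi u - psi c) + (g c * E2 - E1)).
    { unfold E1, E2. rewrite Eg. ring. }
    assert (T3 : Rabs (g c * E2 - E1) <= G * (e2 * (c - u)) + e1 * (c - u)).
    { eapply Rle_trans; [apply Rabs_triang|]. rewrite Rabs_Ropp, Rabs_mult. fold G.
      assert (G * Rabs E2 <= G * (e2 * (c - u))) by (apply Rmult_le_compat_l; lra). lra. }
    assert (Rest : Rabs (sg * ((g c - g u) * (psi u - psi c) + (g c * E2 - E1))) <= e * (c - u)).
    { rewrite Rabs_mult.
      assert (Rabs ((g c - g u) * (psi u - psi c) + (g c * E2 - E1)) <= e * (c - u)).
      { eapply Rle_trans; [apply Rabs_triang|]. rewrite Rabs_mult.
        assert (e3 * ((P + 1) * (c - u)) = e / 3 * (c - u)) by (unfold e3; field; lra).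
        assert (G * (e2 * (c - u)) <= e / 3 * (c - u)).
        { unfold e2. replace (G * (e / (3 * (G + 1)) * (c - u))) with ((G / (G+1)) * (e/3 * (c - u))) by (field; lra).
          assert (G / (G+1) <= 1).
          { apply (Rmult_le_reg_r (G+1)); [lra|]. unfold Rdiv. rewrite Rmult_assoc, Rinv_l; lra. }
          assert (0 <= e / 3 * (c - u)) by nra. nra. }
        unfold e1 in T3. lra. }
      pose proof (Rabs_pos sg). pose proof (Rabs_pos ((g c - g u) * (psi u - psi c) + (g c * E2 - E1))).
      assert (Rabs sg * Rabs ((g c - g u) * (psi u - psi c) + (g c * E2 - E1)) <= 1 * (e * (c - u)))
        by (apply Rmult_le_compat; lra). lra. }
    apply Rabs_le_between in Rest.
    assert (sg * (g c * psi c - phi c) - sg * (g u * psi u - phi u) =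
      sg * (g c - g u) * psi c + sg * ((g c - g u) * (psi u - psi c) + (g c * E2 - E1))).
    { rewrite <- Rmult_minus_distr_l, Edec. ring. }
    lra.
Qed.

Theorem proposition2p2 (T : R -> Prop) (alpha beta : R)
  (phi psi phi' psi' : R -> R) :
  time_scale T -> T alpha -> T beta -> alpha < beta ->
  (forall x, Ioc_T T alpha beta x -> is_nabla_deriv T (Icc_T T alpha beta) phi x (phi' x)) ->
  (forall x, Ioc_T T alpha beta x -> is_nabla_deriv T (Icc_T T alpha beta) psi x (psi' x)) ->
  (forall x, Ioc_T T alpha beta x -> psi' x <> 0) ->
  (exists g', forall x, Ioc_T T alpha beta x ->
      is_nabla_deriv T (Icc_T T alpha beta) (fun y => phi' y / psi' y) x (g' x)) ->
  let Y := fun x => phi' x / psi' x * psi x - phi x in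
  let I := Ioc_T T alpha beta in
  ((forall x, I x -> 0 <= psi (rho T x)) ->
     (increasing_on I (fun y => phi' y / psi' y) -> increasing_on I Y) /\
     (decreasing_on I (fun y => phi' y / psi' y) -> decreasing_on I Y)) /\
  ((forall x, I x -> psi (rho T x) <= 0) ->
     (increasing_on I (fun y => phi' y / psi' y) -> decreasing_on I Y) /\
     (decreasing_on I (fun y => phi' y / psi' y) -> increasing_on I Y)).
Proof.
  intros HT Ta Tb Hab Hphi Hpsi Hnz [gd Hg] Y II.
  assert (K := fun sg => key T alpha beta phi psi phi' psi' gd sg HT Ta Hphi Hpsi Hnz Hg).
  assert (A1 : Rabs 1 <= 1) by (rewrite Rabs_R1; lra).
  assert (Am : Rabs (-1) <= 1) by (unfold Rabs; destruct Rcase_abs; lra).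
  split; intros Hps; split; intros Hm s t Is It Hst; unfold Y.
  - pose proof (K 1 A1) as K1.
    assert (h := K1 ltac:(intros a b Ia Ib hab; pose proof (Hm a b Ia Ib hab); pose proof (Hps b Ib);
      apply Rmult_le_pos; nra) s t Is It Hst). lra.
  - pose proof (K (-1) Am) as K1.
    assert (h := K1 ltac:(intros a b Ia Ib hab; pose proof (Hm a b Ia Ib hab); pose proof (Hps b Ib);
      apply Rmult_le_pos; nra) s t Is It Hst). lra.
  - pose proof (K (-1) Am) as K1.
    assert (h := K1 ltac:(intros a b Ia Ib hab; pose proof (Hm a b Ia Ib hab); pose proof (Hps b Ib);
      nra) s t Is It Hst). lra.
  - pose proof (K 1 A1) as K1.
    assert (h := K1 ltac:(intros a b Ia Ib hab; pose proof (Hm a b Ia Ib hab); pose proof (Hps b Ib);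
      nra) s t Is It Hst). lra.
Qed.
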